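(* Let $(\Omega,\rho)$ be a metric space, $\beta\in(0,1]$, $\emptyset\ne A\subset\Omega$ and $f:\Omega\to[0,1]$ such that $\sup_{u\ne v\in A}\frac{|f(u)-f(v)|}{\rho(u,v)^\beta}<\infty$ and $\mathrm{diam}(A)<\infty$. Then the $\beta$-PMSE $F_A$ of $f$ from $A$ is well defined, takes values in $[0,1]$, and satisfies $\Lambda^\beta_{F_A}(x)\le\Lambda^\beta_f(x)$ for every $x\in\Omega$.
   Context: $\Lambda_g^\beta(x):=\sup_{y\in\Omega\setminus\{x\}}\frac{|g(x)-g(y)|}{\rho(x,y)^\beta}$. For $x\in\Omega$ and $u,v\in A$ (excluding the case $u=v=x$), set $R_x(u,v):=\frac{f(v)-f(u)}{\rho(x,v)^\beta+\rho(x,u)^\beta}$, $F_x(u,v):=f(u)+R_x(u,v)\rho(x,u)^\beta$, $R^*_x:=\sup_{u,v\in A}R_x(u,v)$, and for $0<\epsilon<R_x^*$, $W_x(\epsilon):=\{(u,v)\in A\times A: R_x(u,v)>R_x^*-\epsilon\}$, $\Phi_x(\epsilon):=\{F_x(u,v):(u,v)\in W_x(\epsilon)\}$. The $\beta$-pointwise minimal slope extension ($\beta$-PMSE) is $F_A(x):=\lim_{\epsilon\to0^+}\Phi_x(\epsilon)$, meaning the unique real number $r$ with $\sup_{\phi\in\Phi_x(\epsilon)}|\phi-r|\to0$ as $\epsilon\to0^+$ (''well defined'' means this limit exists). In the degenerate case where $f$ is constant on $A$, $F_A$ is defined to be that constant. *)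

(* Defs.v *)
From HB Require Import structures.
From mathcomp Require Import all_boot all_order all_algebra.
From mathcomp Require Import all_classical all_reals all_analysis.
Set Implicit Arguments. Unset Strict Implicit. Unset Printing Implicit Defensive.
Import Order.TTheory GRing.Theory Num.Theory.
Local Open Scope classical_set_scope.
Local Open Scope ring_scope.

Section PMSE.
Variables (R : realType) (T : Type).

Definition is_metric (rho : T -> T -> R) : Prop :=
  [/\ (forall x y, 0 <= rho x y),
      (forall x y, rho x y = 0 <-> x = y),
      (forall x y, rho x y = rho y x) &
      (forall x y z, rho x z <= rho x y + rho y z)].

Definition Lambda (rho : T -> T -> R) (beta : R) (g : T -> R) (x : T) : \bar R :=
  ereal_sup [set ((`|g x - g y| / (rho x y `^ beta))%:E) | y in ~` [set x]].

Definition holder_seminorm (rho : T -> T -> R) (beta : R) (f : T -> R) (A : set T)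
  : \bar R :=
  ereal_sup [set ((`|f uv.1 - f uv.2| / (rho uv.1 uv.2 `^ beta))%:E)
            | uv in [set uv : T * T | A uv.1 /\ A uv.2 /\ uv.1 <> uv.2]].

Definition diam (rho : T -> T -> R) (A : set T) : \bar R :=
  ereal_sup [set ((rho uv.1 uv.2)%:E) | uv in [set uv : T * T | A uv.1 /\ A uv.2]].

Definition adm_pair (A : set T) (x : T) : set (T * T) :=
  [set uv | A uv.1 /\ A uv.2 /\ ~ (uv.1 = x /\ uv.2 = x)].

Definition Rx (rho : T -> T -> R) (beta : R) (f : T -> R) (x u v : T) : R :=
  (f v - f u) / (rho x v `^ beta + rho x u `^ beta).

Definition Fx (rho : T -> T -> R) (beta : R) (f : T -> R) (x u v : T) : R :=
  f u + Rx rho beta f x u v * rho x u `^ beta.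

Definition Rstar (rho : T -> T -> R) (beta : R) (f : T -> R) (A : set T) (x : T)
  : \bar R :=
  ereal_sup [set ((Rx rho beta f x uv.1 uv.2)%:E) | uv in adm_pair A x].

Definition Wx rho beta f A x (eps : R) : set (T * T) :=
  [set uv | adm_pair A x uv /\
     (Rstar rho beta f A x - eps%:E < (Rx rho beta f x uv.1 uv.2)%:E)%E].

Definition Phix rho beta f A x (eps : R) : set R :=
  [set Fx rho beta f x uv.1 uv.2 | uv in Wx rho beta f A x eps].

(* lim_{eps -> 0+} Phi_x(eps) = r, i.e. sup_{phi in Phi_x(eps)} |phi - r| -> 0
   as eps -> 0+ (eps ranging over 0 < eps < R*_x) *)
Definition Phi_lim rho beta f A x (r : R) : Prop :=
  forall delta : R, 0 < delta -> exists eta : R, 0 < eta /\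
    forall eps : R, 0 < eps -> eps < eta -> (eps%:E < Rstar rho beta f A x)%E ->
      forall phi, Phix rho beta f A x eps phi -> `|phi - r| <= delta.

Definition constant_on (f : T -> R) (A : set T) : Prop :=
  forall u v, A u -> A v -> f u = f v.

Definition is_pmse rho beta f A x (r : R) : Prop :=
  (constant_on f A /\ exists a, A a /\ r = f a) \/
  (~ constant_on f A /\ Phi_lim rho beta f A x r).

(* the beta-PMSE F_A, as a function (meaningful where it is well defined) *)
Definition pmse rho beta f A (x : T) : R :=
  xget 0 [set r | is_pmse rho beta f A x r].

End PMSE.

(* Main.v *)
Require Import Defs.
From HB Require Import structures.
From mathcomp Require Import all_boot all_order all_algebra.
From mathcomp Require Import all_classical all_reals all_analysis.
From mathcomp Require Import ring lra.
Import Order.TTheory GRing.Theory Num.Theory.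
Local Open Scope classical_set_scope.
Local Open Scope ring_scope.

Lemma powR_ge_id {R : realType} (r b : R) : 0 <= r <= 1 -> 0 < b -> b <= 1 -> r <= r `^ b.
Proof.
move=> /andP[r0 r1] b0 b1.
have [->|rn0] := eqVneq r 0; first by rewrite powR0 ?gt_eqF.
by apply: ger1_powR => //; rewrite r1 andbT lt_neqAle eq_sym rn0.
Qed.

Lemma powR_subadd {R : realType} (p q b : R) : 0 <= p -> 0 <= q -> 0 < b -> b <= 1 ->
  (p + q) `^ b <= p `^ b + q `^ b.
Proof.
move=> p0 q0 b0 b1.
have [s0|sn0] := eqVneq (p + q) 0.
  have -> : p = 0 by lra.
  have -> : q = 0 by lra.
  by rewrite addr0 powR0 ?gt_eqF // addr0.
have sp : 0 < p + q by rewrite lt_neqAle eq_sym sn0 addr_ge0.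
have ep : p `^ b = (p + q) `^ b * (p / (p + q)) `^ b.
  rewrite -powRM ?divr_ge0 // ?(ltW sp) //.
  have -> : (p + q) * (p / (p + q)) = p by rewrite mulrC divfK // gt_eqF.
  done.
have eq' : q `^ b = (p + q) `^ b * (q / (p + q)) `^ b.
  rewrite -powRM ?divr_ge0 // ?(ltW sp) //.
  have -> : (p + q) * (q / (p + q)) = q by rewrite mulrC divfK // gt_eqF.
  done.
have h1 : p / (p + q) <= (p / (p + q)) `^ b.
  apply: powR_ge_id => //; apply/andP; split; [by rewrite divr_ge0 // ltW | rewrite ler_pdivrMr // mul1r; lra].
have h2 : q / (p + q) <= (q / (p + q)) `^ b.
  apply: powR_ge_id => //; apply/andP; split; [by rewrite divr_ge0 // ltW | rewrite ler_pdivrMr // mul1r; lra].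
have e1 : p / (p + q) + q / (p + q) = 1 by rewrite -mulrDl divff.
rewrite ep eq' -mulrDr -{1}[(p + q) `^ b]mulr1 ler_wpM2l ?powR_ge0 //.
lra.
Qed.

Lemma slope_abstract {R : realType} {T : Type} (A : set T) (f d d' : T -> R)
  (s t l dl c e : R) :
  0 <= t -> 0 <= s -> s <= l -> 0 <= dl ->
  (forall a, A a -> f a - s * d a <= c /\ c <= f a + s * d a) ->
  (forall a, A a -> f a - t * d' a <= e /\ e <= f a + t * d' a) ->
  (forall eta, 0 < eta -> exists2 u, A u & f u + s * d u <= c + eta) ->
  (forall eta, 0 < eta -> exists2 v, A v & c - eta <= f v - s * d v) ->
  (forall eta, 0 < eta -> exists2 u, A u & f u + t * d' u <= e + eta) ->
  (forall eta, 0 < eta -> exists2 v, A v & e - eta <= f v - t * d' v) ->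
  (forall a, A a -> [/\ 0 <= d a, 0 <= d' a, d a <= d' a + dl & d' a <= d a + dl]) ->
  `|c - e| <= l * dl.
Proof.
move=> t0 s0 sl dl0 hx hy axu axv ayu ayv tri.
have sdl : s * dl <= l * dl by rewrite ler_wpM2r.
rewrite ler_norml; apply/andP; split.
-
  rewrite leNgt; apply/negP => hlt.
  have [g gE] : exists g, g = e - c - l * dl by eexists.
  have g0 : 0 < g by lra.
  have g2 : 0 < g / 2 by rewrite divr_gt0.
  have ts : t < s.
    have [v Av hv] := ayv _ g2.
    have [hx1 _] := hx v Av.
    have [dv0 d'v0 t1 t2] := tri v Av.
    rewrite ltNge; apply/negP => st.
    have p1 : s * d v <= s * d' v + s * dl by rewrite -mulrDr ler_wpM2l.
    have p2 : s * d' v <= t * d' v by rewrite ler_wpM2r.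
    have : g / 2 + g / 2 = g by rewrite -splitr.
    lra.
  have [u Au hu] := axu _ g2.
  have [_ hy2] := hy u Au.
  have [du0 d'u0 t1 t2] := tri u Au.
  have p1 : t * d' u <= t * d u + t * dl by rewrite -mulrDr ler_wpM2l.
  have p2 : t * d u <= s * d u by rewrite ler_wpM2r // ltW.
  have p3 : t * dl <= s * dl by rewrite ler_wpM2r // ltW.
  have : g / 2 + g / 2 = g by rewrite -splitr.
  lra.
- rewrite leNgt; apply/negP => hlt.
  have [g gE] : exists g, g = c - e - l * dl by eexists.
  have g0 : 0 < g by lra.
  have g2 : 0 < g / 2 by rewrite divr_gt0.
  have ts : t < s.
    have [u Au hu] := ayu _ g2.
    have [_ hx2] := hx u Au.
    have [du0 d'u0 t1 t2] := tri u Au.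
    rewrite ltNge; apply/negP => st.
    have p1 : s * d u <= s * d' u + s * dl by rewrite -mulrDr ler_wpM2l.
    have p2 : s * d' u <= t * d' u by rewrite ler_wpM2r.
    have : g / 2 + g / 2 = g by rewrite -splitr.
    lra.
  have [v Av hv] := axv _ g2.
  have [hy1 _] := hy v Av.
  have [dv0 d'v0 t1 t2] := tri v Av.
  have p1 : t * d' v <= t * d v + t * dl by rewrite -mulrDr ler_wpM2l.
  have p2 : t * d v <= s * d v by rewrite ler_wpM2r // ltW.
  have p3 : t * dl <= s * dl by rewrite ler_wpM2r // ltW.
  have : g / 2 + g / 2 = g by rewrite -splitr.
  lra.
Qed.

Lemma core (R : realType) (T : Type) (rho : T -> T -> R) (beta : R) (A : set T) (f : T -> R)
 (Hm : is_metric rho) (b0 : 0 < beta) (b1 : beta <= 1) (f01 : forall x, 0 <= f x <= 1)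
 (H : R) (hH : (holder_seminorm rho beta f A <= H%:E)%E)
 (a0 : T) (Aa0 : A a0) (D : R) (hD : (diam rho A <= D%:E)%E)
 (u0 v0 : T) (Au0 : A u0) (Av0 : A v0) (fuv : f u0 < f v0) (z : T) :
 exists s c : R, 0 < s /\ Rstar rho beta f A z = s%:E /\
   (forall a, A a -> (f a - s * rho z a `^ beta <= c) /\ (c <= f a + s * rho z a `^ beta)) /\
   (forall e, 0 < e -> exists2 u, A u & f u + s * rho z u `^ beta <= c + e) /\
   (forall e, 0 < e -> exists2 v, A v & c - e <= f v - s * rho z v `^ beta) /\
   Phi_lim rho beta f A z c /\
   (forall r, Phi_lim rho beta f A z r -> r = c).
Proof.
case: Hm => [r0 req rsym rtri].
pose d a := rho z a `^ beta.
have d0 a : 0 <= d a := powR_ge0 _ _.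
have rpos u v : u <> v -> 0 < rho u v.
  move=> uv; rewrite lt_neqAle r0 andbT eq_sym; apply/eqP => /req //.
have dpos a : a <> z -> 0 < d a.
  by move=> az; apply: powR_gt0; apply: rpos => /esym.
have dsub u v : rho u v `^ beta <= d u + d v.
  apply: le_trans _ (powR_subadd _ _ _ (r0 z u) (r0 z v) b0 b1).
  apply: ge0_ler_powR; rewrite ?nnegrE ?addr_ge0 ?(ltW b0) //.
  by rewrite (rsym z u); apply: rtri.
have hdiam a : A a -> rho a0 a <= D.
  move=> Aa; have : ((rho a0 a)%:E <= diam rho A)%E.
    by apply: ereal_sup_ubound; exists (a0, a).
  by move=> /le_trans /(_ hD); rewrite lee_fin.
pose C := 1 + (rho z a0 + D).
have C1 : 1 <= C by rewrite /C lerDl addr_ge0 // (le_trans (r0 a0 a0)) // hdiam.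
have C0 : 0 < C by apply: lt_le_trans C1.
have dC a : A a -> d a <= C.
  move=> Aa; apply: le_trans (ler1_powR C1 b1).
  apply: ge0_ler_powR; rewrite ?nnegrE ?(ltW b0) ?(ltW C0) //.
  apply: le_trans (rtri z a0 a) _; rewrite /C.
  have := hdiam a Aa; lra.
have hterm u v : A u -> A v -> u <> v -> `|f u - f v| <= H * rho u v `^ beta.
  move=> Au Av uv.
  have : ((`|f u - f v| / rho u v `^ beta)%:E <= holder_seminorm rho beta f A)%E.
    by apply: ereal_sup_ubound; exists (u, v).
  move=> /le_trans /(_ hH); rewrite lee_fin ler_pdivrMr //.
  by apply: powR_gt0; apply: rpos.
have H0 : 0 <= H.
  have u0v0 : u0 <> v0 by move=> e; move: fuv; rewrite e ltxx.
  have := hterm _ _ Au0 Av0 u0v0.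
  have := powR_gt0 beta (rpos _ _ u0v0).
  move=> p1 p2; rewrite -(pmulr_lge0 _ p1); apply: le_trans p2; exact: normr_ge0.
have den u v : ~ (u = z /\ v = z) -> 0 < d v + d u.
  move=> nz; have [uz|uz] := pselect (u = z).
    have vz : v <> z by move=> vz; apply: nz.
    by rewrite ltr_pwDl // dpos.
  by rewrite ltr_pwDr // dpos.
have Rle u v : A u -> A v -> ~ (u = z /\ v = z) -> Rx rho beta f z u v <= H.
  move=> Au Av nz; rewrite /Rx ler_pdivrMr ?den //.
  case: (leP (f v) (f u)) => fvu.
    apply: le_trans (_ : 0 <= _); first by lra.
    by apply: mulr_ge0 => //; apply: ltW; apply: den.
  have uv : u <> v by move=> e; move: fvu; rewrite e ltxx.
  apply: le_trans (_ : `|f u - f v| <= _); first by rewrite distrC ler_norm.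
  apply: le_trans (hterm _ _ Au Av uv) _.
  by rewrite ler_wpM2l // addrC.
have u0v0 : ~ (u0 = z /\ v0 = z).
  by move=> [e1 e2]; move: fuv; rewrite e1 e2 ltxx.
have R0pos : 0 < Rx rho beta f z u0 v0.
  by rewrite /Rx divr_gt0 ?subr_gt0 // den.
have Rst_ub : (Rstar rho beta f A z <= H%:E)%E.
  apply: ge_ereal_sup => _ [[u v] [Au [Av nz]] <-].
  by rewrite lee_fin; apply: Rle.
have Rst_lb : ((Rx rho beta f z u0 v0)%:E <= Rstar rho beta f A z)%E.
  by apply: ereal_sup_ubound; exists (u0, v0).
have [s Es] : exists s, Rstar rho beta f A z = s%:E.
  move: Rst_ub Rst_lb; case: (Rstar rho beta f A z) => [s _ _| |].
  - by exists s.
  - by rewrite leye_eq.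
  - by move=> _; rewrite leeNy_eq.
have s_lb : Rx rho beta f z u0 v0 <= s by rewrite -lee_fin -Es.
have s0 : 0 < s by apply: lt_le_trans s_lb.
have Rle_s u v : A u -> A v -> ~ (u = z /\ v = z) -> Rx rho beta f z u v <= s.
  move=> Au Av nz; rewrite -lee_fin -Es.
  by apply: ereal_sup_ubound; exists (u, v).
have cross u v : A u -> A v -> f v - s * d v <= f u + s * d u.
  move=> Au Av; have [[-> ->]|nz] := pselect (u = z /\ v = z).
    have := mulr_ge0 (ltW s0) (d0 z); lra.
  have := Rle_s _ _ Au Av nz; rewrite /Rx ler_pdivrMr ?den //.
  rewrite -/(d u) -/(d v); lra.
pose E := [set f a + s * d a | a in A].
have hasl : has_lbound E.
  exists 0 => _ [a Aa <-]; have := f01 a; have := mulr_ge0 (ltW s0) (d0 a).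
  move=> h /andP[h1 _]; lra.
pose c := inf E.
have hc1 a : A a -> c <= f a + s * d a.
  by move=> Aa; apply: ge_inf => //; exists a.
have hc2 v : A v -> f v - s * d v <= c.
  move=> Av; apply: lb_le_inf; first by exists (f a0 + s * d a0), a0.
  by move=> _ [u Au <-]; apply: cross.
have pairc eps u v : 0 < eps -> A u -> A v -> ~ (u = z /\ v = z) ->
    s - eps < Rx rho beta f z u v ->
    [/\ `|Fx rho beta f z u v - c| <= eps * C,
        f u + s * d u <= c + 2 * eps * C &
        c - 2 * eps * C <= f v - s * d v].
  move=> e0 Au Av nz hlt.
  have hR := Rle_s _ _ Au Av nz.
  set Rr := Rx rho beta f z u v in hlt hR *.
  have ide : Rr * (d v + d u) = f v - f u.
    by rewrite /Rr /Rx -/(d u) -/(d v) divfK // gt_eqF // den.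
  have F1 : Fx rho beta f z u v = f u + Rr * d u by [].
  have q1 : s * d u - Rr * d u <= eps * C.
    rewrite -mulrBl; apply: le_trans (_ : eps * d u <= _).
      by rewrite ler_wpM2r //; lra.
    by rewrite ler_wpM2l ?dC // ltW.
  have q2 : s * d v - Rr * d v <= eps * C.
    rewrite -mulrBl; apply: le_trans (_ : eps * d v <= _).
      by rewrite ler_wpM2r //; lra.
    by rewrite ler_wpM2l ?dC // ltW.
  have q3 : 0 <= s * d u - Rr * d u by rewrite -mulrBl mulr_ge0 // subr_ge0.
  have q4 : 0 <= s * d v - Rr * d v by rewrite -mulrBl mulr_ge0 // subr_ge0.
  have := hc1 u Au; have := hc2 v Av.
  rewrite mulrDr in ide.
  move=> h1 h2; split.
  - rewrite F1 ler_norml; apply/andP; split; lra.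
  - lra.
  - lra.
have expair eps : 0 < eps -> exists u v, [/\ A u, A v, ~ (u = z /\ v = z) &
    s - eps < Rx rho beta f z u v].
  move=> e0; have : ((s - eps)%:E < Rstar rho beta f A z)%E.
    by rewrite Es lte_fin; lra.
  by move=> /ereal_sup_gt [_ [[u v] [Au [Av nz]] <-]]; rewrite lte_fin => h; exists u, v.
exists s, c; split; first by []; split; first by []; split; [|split; [|split; [|split]]].
- by move=> a Aa; split; [exact: hc2 a Aa | exact: hc1 a Aa].
- move=> e e0; have e1 : 0 < e / (2 * C) by rewrite divr_gt0 // mulr_gt0.
  have [u [v [Au Av nz hlt]]] := expair _ e1.
  have [_ h _] := pairc _ _ _ e1 Au Av nz hlt.
  have E2 : 2 * (e / (2 * C)) * C = e.
    by field; rewrite gt_eqF.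
  by exists u => //; rewrite -E2.
- move=> e e0; have e1 : 0 < e / (2 * C) by rewrite divr_gt0 // mulr_gt0.
  have [u [v [Au Av nz hlt]]] := expair _ e1.
  have [_ _ h] := pairc _ _ _ e1 Au Av nz hlt.
  have E2 : 2 * (e / (2 * C)) * C = e.
    by field; rewrite gt_eqF.
  by exists v => //; rewrite -E2.
- move=> del del0; exists (del / C); split; first by rewrite divr_gt0.
  move=> eps e0 eeta _ phi [[u v] [[Au [Av nz]] hlt] <-].
  move: hlt; rewrite Es -EFinD lte_fin /= => hlt.
  have [h _ _] := pairc _ _ _ e0 Au Av nz hlt.
  apply: le_trans h _; rewrite -ler_pdivlMr //; exact: ltW.
- move=> r hr; apply/eqP; rewrite -subr_eq0 -normr_eq0; apply/eqP.
  apply/le_anti; rewrite normr_ge0 andbT; rewrite leNgt; apply/negP => rc.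
  pose del := `|r - c| / 3.
  have del0 : 0 < del by rewrite divr_gt0.
  have [eta [eta0 heta]] := hr _ del0.
  pose m := Num.min eta (Num.min s (del / C)).
  have m0 : 0 < m by rewrite /m !lt_min eta0 s0 divr_gt0.
  have m1 : m <= eta by rewrite /m ge_min lexx.
  have m2 : m <= s by rewrite /m !ge_min lexx orbT.
  have m3 : m <= del / C by rewrite /m !ge_min lexx !orbT.
  have e0 : 0 < m / 2 by rewrite divr_gt0.
  have [u [v [Au Av nz hlt]]] := expair _ e0.
  have [h _ _] := pairc _ _ _ e0 Au Av nz hlt.
  have hp : `|Fx rho beta f z u v - r| <= del.
    apply: (heta (m / 2)) => //.
    - by lra.
    - by rewrite Es lte_fin; lra.
    - exists (u, v) => //; split; first by [].
      by rewrite Es -EFinD lte_fin.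
  have h3 : m / 2 * C <= del / 2.
    rewrite mulrAC ler_pM2r //; rewrite ler_pdivlMr // in m3; lra.
  move: h; rewrite ler_norml => /andP[h1 h2].
  move: hp; rewrite ler_norml => /andP[h5 h4].
  have E3 : del * 3 = `|r - c| by rewrite /del divfK.
  have : `|r - c| <= del + del / 2.
    rewrite ler_norml; apply/andP; split; lra.
  lra.
Qed.

Lemma powtri {R : realType} {T : Type} (rho : T -> T -> R) (beta : R) :
  is_metric rho -> 0 < beta -> beta <= 1 ->
  forall x y a, rho x a `^ beta <= rho x y `^ beta + rho y a `^ beta.
Proof.
case=> r0 req rsym rtri b0 b1 x y a.
apply: le_trans _ (powR_subadd _ _ _ (r0 x y) (r0 y a) b0 b1).
apply: ge0_ler_powR; rewrite ?nnegrE ?addr_ge0 ?(ltW b0) //.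
Qed.

Theorem theorem8 (R : realType) (T : Type) (rho : T -> T -> R) (beta : R)
    (A : set T) (f : T -> R) :
  is_metric rho -> 0 < beta -> beta <= 1 ->
  A !=set0 ->
  (forall x, 0 <= f x <= 1) ->
  (holder_seminorm rho beta f A < +oo)%E ->
  (diam rho A < +oo)%E ->
  [/\ (forall x, exists! r, is_pmse rho beta f A x r),
      (forall x, 0 <= pmse rho beta f A x <= 1) &
      (forall x, (Lambda rho beta (pmse rho beta f A) x <= Lambda rho beta f x)%E)].
Proof.
move=> Hm b0 b1 [a0 Aa0] f01 hol dia.
have Hm' := Hm; case: Hm' => [r0 req rsym rtri].
have rpos u v : u <> v -> 0 < rho u v.
  move=> uv; rewrite lt_neqAle r0 andbT eq_sym; apply/eqP => /req //.
have Lam_ge0 x y : y <> x -> (0%:E <= Lambda rho beta f x)%E.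
  move=> yx; apply: le_trans (_ : ((`|f x - f y| / rho x y `^ beta)%:E <= _)%E).
    by rewrite lee_fin divr_ge0 ?powR_ge0.
  by apply: ereal_sup_ubound; exists y.
have [cst|ncst] := pselect (constant_on f A).
  have uniq x r : is_pmse rho beta f A x r <-> r = f a0.
    split.
    - by case=> [[_ [a [Aa ->]]]|[nc _]]; [exact: cst | contradiction].
    - by move=> ->; left; split => //; exists a0.
  have pm x : pmse rho beta f A x = f a0.
    by rewrite /pmse; apply: xget_unique; [apply/uniq | move=> y /uniq].
  split.
  - move=> x; exists (f a0); split; first exact/uniq.
    by move=> y /uniq ->.
  - by move=> x; rewrite pm; exact: f01.
  - move=> x; apply: ge_ereal_sup => _ [y ny <-]; rewrite !pm subrr normr0 mul0r.
    exact: (Lam_ge0 x y).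
have [H hH] : exists H, (holder_seminorm rho beta f A <= H%:E)%E.
  move: hol; case: (holder_seminorm rho beta f A) => [H _| |].
  - by exists H.
  - by rewrite ltxx.
  - by move=> _; exists 0; rewrite leNye.
have [D hD] : exists D, (diam rho A <= D%:E)%E.
  move: dia; case: (diam rho A) => [D _| |].
  - by exists D.
  - by rewrite ltxx.
  - by move=> _; exists 0; rewrite leNye.
have [u0 [v0 [Au0 [Av0 fuv]]]] : exists u0 v0, A u0 /\ A v0 /\ f u0 < f v0.
  apply: (@contra_notP _ (constant_on f A) _ ncst) => hn u v Au Av.
  apply/eqP; rewrite eq_le; apply/andP; split; rewrite leNgt; apply/negP => h; apply: hn.
  - by exists v, u.
  - by exists u, v.
have K z := @core _ _ _ _ _ _ Hm b0 b1 f01 _ hH _ Aa0 _ hD _ _ Au0 Av0 fuv z.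
have pmE z c : Phi_lim rho beta f A z c -> (forall r, Phi_lim rho beta f A z r -> r = c) ->
    pmse rho beta f A z = c.
  move=> hc hu; rewrite /pmse; apply: xget_unique; first by right.
  by move=> y [[cst' _]|[_ hy]]; [contradiction | exact: hu].
split.
- move=> x; have [s [c [_ [_ [_ [_ [_ [hl hu]]]]]]]] := K x.
  exists c; split; first by right.
  by move=> y [[cst' _]|[_ hy]]; [contradiction | symmetry; exact: hu].
- move=> x; have [s [c [s0 [_ [_ [au [av [hl hu]]]]]]]] := K x.
  rewrite (pmE _ _ hl hu); apply/andP; split.
  + apply/ler_addgt0Pr => e e0.
    have [u Au h] := au _ e0.
    have := f01 u; have := mulr_ge0 (ltW s0) (powR_ge0 (rho x u) beta).
    move=> h1 /andP[h2 _]; lra.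
  + apply/ler_addgt0Pr => e e0.
    have [v Av h] := av _ e0.
    have := f01 v; have := mulr_ge0 (ltW s0) (powR_ge0 (rho x v) beta).
    move=> h1 /andP[_ h2]; lra.
- move=> x; have [s [c [s0 [Es [hx [axu [axv [hl hu]]]]]]]] := K x.
  apply: ge_ereal_sup => _ [y nyx <-].
  have [t [e [t0 [Et [hy [ayu [ayv [hl' hu']]]]]]]] := K y.
  rewrite (pmE _ _ hl hu) (pmE _ _ hl' hu').
  have ly : ((`|f x - f y| / rho x y `^ beta)%:E <= Lambda rho beta f x)%E.
    by apply: ereal_sup_ubound; exists y.
  have Lg0 := Lam_ge0 x y nyx.
  move: ly Lg0; case EL: (Lambda rho beta f x) => [l| |] ly l0; last first.
  - by move: l0; rewrite leeNy_eq.
  - by rewrite leey.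
  rewrite lee_fin in l0; rewrite lee_fin.
  have dl0 : 0 < rho x y `^ beta by apply: powR_gt0; apply: rpos => /esym.
  rewrite ler_pdivrMr //.
  have hfx a : A a -> `|f x - f a| <= l * rho x a `^ beta.
    move=> Aa; have [<-|ax] := pselect (a = x).
      by rewrite subrr normr0 mulr_ge0 ?powR_ge0.
    have : ((`|f x - f a| / rho x a `^ beta)%:E <= l%:E)%E.
      by rewrite -EL; apply: ereal_sup_ubound; exists a.
    rewrite lee_fin ler_pdivrMr //; apply: powR_gt0; apply: rpos.
    by move=> xa; apply: ax; rewrite xa.
  have sl : s <= l.
    rewrite -lee_fin -Es; apply: ge_ereal_sup => _ [[u v] [Au [Av nz]] <-].
    rewrite lee_fin /Rx.
    have du0 := powR_ge0 (rho x u) beta; have dv0 := powR_ge0 (rho x v) beta.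
    have den : 0 < rho x v `^ beta + rho x u `^ beta.
      have [ux|ux] := pselect (u = x).
        have vx : v <> x by move=> vx; apply: nz.
        have : 0 < rho x v `^ beta.
          by apply: powR_gt0; apply: rpos => xv; apply: vx; rewrite xv.
        lra.
      have : 0 < rho x u `^ beta.
        by apply: powR_gt0; apply: rpos => xu; apply: ux; rewrite xu.
      lra.
    rewrite ler_pdivrMr //.
    have h1 := hfx u Au; have h2 := hfx v Av.
    have h3 : f v - f x <= `|f x - f v| by rewrite distrC ler_norm.
    have h4 : f x - f u <= `|f x - f u| by rewrite ler_norm.
    rewrite mulrDr; lra.
  apply: (@slope_abstract _ _ A f (fun a => rho x a `^ beta) (fun a => rho y a `^ beta) s t l _ c e)
    => //; try exact: ltW.
  move=> a Aa /=; split; rewrite ?powR_ge0 //.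
  - by rewrite addrC; exact: powtri Hm b0 b1 x y a.
  - by rewrite addrC (rsym x y); exact: powtri Hm b0 b1 y x a.
Qed.
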